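(* Let $M$ be a finite set of alternatives, $\mathcal{R}$ the set of weak preference orders on $M$, and $\varphi:\mathcal{R}\to\Delta(M)$ a mechanism. If $\varphi$ is multi-separation strategyproof, then it is strategyproof.
   Context: A preference order is a complete, transitive relation $R$ on $M$; $a\,I\,b$ means $a\,R\,b$ and $b\,R\,a$; $a\,P\,b$ means $a\,R\,b$ and not $b\,R\,a$. Write $R$ as $M_1\,P\,\cdots\,P\,M_K$ where $(M_k)$ are the nonempty indifference classes ordered so that $a\,P\,b$ for $a\in M_k$, $b\in M_{k'}$, $k<k'$. A lottery $x\in\Delta(M)$ first order-stochastically dominates $y$ at $R$ if $\sum_{j: j R a}x_j\ge\sum_{j: j R a}y_j$ for all $a\in M$. $\varphi$ is strategyproof if $\varphi(R)$ first order-stochastically dominates $\varphi(R')$ at $R$ for all $R,R'\in\mathcal{R}$. A multi-separation is a pair $(R,R')$ such that, with $R=M_1\,P\,\cdots\,P\,M_K$, there are integers $L_1,\dots,L_K\ge1$ and, for each $k$, a partition of $M_k$ into pairwise disjoint nonempty sets $M_k^1,\dots,M_k^{L_k}$ with $R'=M_1^1\,P'\,\cdots\,P'\,M_1^{L_1}\,P'\,M_2^1\,P'\,\cdots\,P'\,M_K^1\,P'\,\cdots\,P'\,M_K^{L_K}$ (indifference within each listed set). $\varphi$ is multi-separation strategyproof if for every multi-separation $(R,R')$, $\varphi(R)$ first order-stochastically dominates $\varphi(R')$ at $R$ and $\varphi(R')$ first order-stochastically dominates $\varphi(R)$ at $R'$. *)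

(* Defs.v *)
From mathcomp Require Import all_boot all_order all_algebra.
Set Implicit Arguments. Unset Strict Implicit. Unset Printing Implicit Defensive.
Import Order.TTheory GRing.Theory Num.Theory.
Local Open Scope ring_scope.

(* A preference order: complete and transitive relation on M.
   [R a b] means "a is weakly preferred to b". *)
Definition complete (M : finType) (R : rel M) : Prop := forall a b, R a b || R b a.
Definition transitive_rel (M : finType) (R : rel M) : Prop :=
  forall a b c, R a b -> R b c -> R a c.
Definition pref_order (M : finType) (R : rel M) : Prop :=
  complete R /\ transitive_rel R.

Definition lottery (T : realFieldType) (M : finType) (x : {ffun M -> T}) : Prop :=
  (forall j, 0 <= x j) /\ \sum_(j : M) x j = 1.

Definition fosd (T : realFieldType) (M : finType) (R : rel M)
    (x y : {ffun M -> T}) : Prop :=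
  forall a : M, \sum_(j : M | R j a) y j <= \sum_(j : M | R j a) x j.

(* A mechanism phi : preference orders -> lotteries.  It is represented as a
   function on all relations, required to return lotteries on preference orders. *)
Definition mechanism (T : realFieldType) (M : finType) (phi : rel M -> {ffun M -> T}) : Prop :=
  forall R, pref_order R -> lottery (phi R).

Definition strategyproof (T : realFieldType) (M : finType) (phi : rel M -> {ffun M -> T}) : Prop :=
  forall R R', pref_order R -> pref_order R' -> fosd R (phi R) (phi R').

(* (R, R') is a multi-separation: R = M_1 P ... P M_K with indifference class
   index k (a R b iff k a <= k b, M_1 the top class), and R' splits each class
   M_k into sub-blocks indexed by l, ordered lexicographically. *)
Definition multi_separation (M : finType) (R R' : rel M) : Prop :=
  exists (k l : M -> nat),
    (forall a b, R a b = (k a <= k b)%N) /\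
    (forall a b, R' a b = ((k a < k b)%N || ((k a == k b) && (l a <= l b)%N))).

Definition ms_strategyproof (T : realFieldType) (M : finType) (phi : rel M -> {ffun M -> T}) : Prop :=
  forall R R', pref_order R -> pref_order R' -> multi_separation R R' ->
    fosd R (phi R) (phi R') /\ fosd R' (phi R') (phi R).

(* Main.v *)
Require Import Defs.
From mathcomp Require Import all_boot all_order all_algebra.
From mathcomp Require Import zify lra.
Set Implicit Arguments. Unset Strict Implicit. Unset Printing Implicit Defensive.
Import Order.TTheory GRing.Theory Num.Theory.

Definition cnt (M : finType) (Y : rel M) (b : M) : nat := #|[pred i | Y i b]|.
Definition lexr (M : finType) (k l : M -> nat) : rel M :=
  fun x y => (k x < k y)%N || ((k x == k y) && (l x <= l y)%N).
Definition Arel (M : finType) (V : pred M) : rel M := fun x y => V x || ~~ V y.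
Definition fV (T : realFieldType) (M : finType) (phi : rel M -> {ffun M -> T}) (V : pred M) : T :=
  (\sum_(j | V j) phi (Arel V) j)%R.

Lemma rank_eq (M : finType) (Y : rel M) : pref_order Y ->
  forall a b, Y a b = (cnt Y a <= cnt Y b)%N.
Proof.
move=> [co tr] a b.
have refl c : Y c c by have := co c c; rewrite orbb.
case hab: (Y a b).
  apply/esym; apply: subset_leq_card; apply/subsetP => i; rewrite !inE => h.
  exact: tr h hab.
have hba : Y b a by have := co a b; rewrite hab.
apply/esym/negbTE; rewrite -ltnNge; apply: proper_card; apply/properP; split.
  by apply/subsetP => i; rewrite !inE => h; exact: tr h hba.
by exists a; rewrite !inE ?refl ?hab.
Qed.

Lemma pref_lex (M : finType) (Y : rel M) (k l : M -> nat) :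
  (forall a b, Y a b = lexr k l a b) -> pref_order Y.
Proof.
move=> h; split.
  by move=> a b; rewrite !h /lexr; lia.
by move=> a b c; rewrite !h /lexr; lia.
Qed.

Lemma fosd_upper (T : realFieldType) (M : finType) (Y : rel M) (x z : {ffun M -> T}) (V : pred M) :
  pref_order Y -> fosd Y x z -> (forall i j, V j -> Y i j -> V i) ->
  (\sum_(j | V j) z j <= \sum_(j | V j) x j)%R.
Proof.
move=> pY hf cl.
case: (pickP V) => [v Vv|V0]; last by rewrite !big_pred0.
case: (@arg_maxnP M v V (cnt Y) Vv) => b Vb bmax.
have e : forall j, V j = Y j b.
  move=> j; apply/idP/idP => [Vj|Yjb]; last exact: cl _ _ Vb Yjb.
  by rewrite (rank_eq pY); apply: bmax.
by rewrite (eq_bigl _ _ e) [X in (_ <= X)%R](eq_bigl _ _ e); apply: hf.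
Qed.

Lemma sum_split (T : realFieldType) (M : finType) (x : {ffun M -> T}) (V V1 V2 : pred M) :
  (forall j, V j = V1 j || V2 j) -> (forall j, ~~ (V1 j && V2 j)) ->
  (\sum_(j | V j) x j = \sum_(j | V1 j) x j + \sum_(j | V2 j) x j)%R.
Proof.
move=> e d; rewrite (bigID V1) /=; congr (_ + _)%R; apply: eq_bigl => j; rewrite e.
  by case: (V1 j); case: (V2 j).
by have := d j; case: (V1 j); case: (V2 j).
Qed.

Lemma ML (T : realFieldType) (M : finType) (phi : rel M -> {ffun M -> T}) (X Y : rel M) (k l : M -> nat) :
  ms_strategyproof phi ->
  (forall a b, X a b = (k a <= k b)%N) -> (forall a b, Y a b = lexr k l a b) ->
  (forall V : pred M, (forall i j, V j -> (k i <= k j)%N -> V i) ->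
     (\sum_(j | V j) phi Y j = \sum_(j | V j) phi X j)%R) /\
  (forall V : pred M, (forall i j, V j -> Y i j -> V i) ->
     (\sum_(j | V j) phi X j <= \sum_(j | V j) phi Y j)%R).
Proof.
move=> ms hX hY.
have pX : pref_order X by apply: (@pref_lex _ _ k (fun _ => 0%N)) => a b; rewrite hX /lexr; lia.
have pY : pref_order Y by apply: pref_lex hY.
have [f1 f2] : fosd X (phi X) (phi Y) /\ fosd Y (phi Y) (phi X).
  by apply: ms => //; exists k, l; split; [exact: hX | exact: hY].
split.
  move=> V cl; apply/le_anti/andP; split.
    by apply: (fosd_upper pX f1) => i j Vj; rewrite hX; apply: cl.
  apply: (fosd_upper pY f2) => i j Vj; rewrite hY /lexr => h; apply: (cl _ _ Vj); lia.
by move=> V cl; apply: (fosd_upper pY f2).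
Qed.

Lemma EQ (T : realFieldType) (M : finType) (phi : rel M -> {ffun M -> T}) (Y : rel M) (V : pred M) :
  ms_strategyproof phi -> pref_order Y -> (forall i j, V j -> Y i j -> V i) ->
  (\sum_(j | V j) phi Y j)%R = fV phi V.
Proof.
move=> ms pY cl.
have [co _] := pY.
have hX : forall a b, Arel V a b = ((fun j => nat_of_bool (~~ V j)) a <= (fun j => nat_of_bool (~~ V j)) b)%N.
  by move=> a b; rewrite /Arel; case: (V a); case: (V b).
have hY : forall a b, Y a b = lexr (fun j => nat_of_bool (~~ V j)) (cnt Y) a b.
  move=> a b; rewrite /lexr (rank_eq pY).
  case Va: (V a); case Vb: (V b) => //=.
  + have := co a b; rewrite (rank_eq pY) (rank_eq pY b a).
    case h: (cnt Y a <= cnt Y b)%N => //= h2.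
    by have := cl b a Va; rewrite (rank_eq pY) h2 Vb => /(_ isT).
  + case h: (cnt Y a <= cnt Y b)%N => //.
    by have := cl a b Vb; rewrite (rank_eq pY) h Va => /(_ isT).
have [h1 _] := ML ms hX hY.
rewrite /fV h1 //.
by move=> i j Vj /=; rewrite Vj; case: (V i).
Qed.

Lemma pref_Arel (M : finType) (V : pred M) : pref_order (Arel V).
Proof.
split; first by move=> a b; rewrite /Arel; case: (V a); case: (V b).
by move=> a b c; rewrite /Arel; case: (V a); case: (V b); case: (V c).
Qed.

Lemma f_ext (T : realFieldType) (M : finType) (phi : rel M -> {ffun M -> T}) (V1 V2 : pred M) :
  ms_strategyproof phi -> V1 =1 V2 -> fV phi V1 = fV phi V2.
Proof.
move=> ms e.
rewrite -(@EQ T M phi (Arel V2) V1 ms (pref_Arel V2)).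
  by rewrite /fV; apply: eq_bigl.
by move=> i j; rewrite /Arel !e => ->; case: (V2 i).
Qed.

Ltac solve_cl S P B dSP dSB dPB :=
  let i := fresh "i" in let j := fresh "j" in
  move=> i j; rewrite /lexr /=;
  move: (dSP i) (dSB i) (dPB i) (dSP j) (dSB j) (dPB j);
  case: (S i); case: (P i); case: (B i); case: (S j); case: (P j); case: (B j) => //=; lia.

Lemma SUB (T : realFieldType) (M : finType) (phi : rel M -> {ffun M -> T}) (S P B : pred M) :
  ms_strategyproof phi ->
  (forall j, ~~ (S j && P j)) -> (forall j, ~~ (S j && B j)) -> (forall j, ~~ (P j && B j)) ->
  (fV phi (fun j => S j || P j || B j) - fV phi (fun j => S j || P j)
   <= fV phi (fun j => S j || B j) - fV phi S)%R.
Proof.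
move=> ms dSP dSB dPB.
pose k j := if S j then 0%N else if P j || B j then 1%N else 2%N.
pose l2 j := if B j then 1%N else 0%N.
pose l3 j := if P j then 1%N else 0%N.
pose X := fun x y => (k x <= k y)%N.
pose Y2 := lexr k l2.
pose Y3 := lexr k l3.
have [A2 B2] := @ML T M phi X Y2 k l2 ms (fun a b => erefl) (fun a b => erefl).
have [A3 B3] := @ML T M phi X Y3 k l3 ms (fun a b => erefl) (fun a b => erefl).
have p2 : pref_order Y2 by apply: (pref_lex (k:=k) (l:=l2)).
have p3 : pref_order Y3 by apply: (pref_lex (k:=k) (l:=l3)).
rewrite -(EQ ms p2 (V := fun j => S j || P j || B j)); last by rewrite /Y2 /k /l2; solve_cl S P B dSP dSB dPB.
rewrite -(EQ ms p2 (V := fun j => S j || P j)); last by rewrite /Y2 /k /l2; solve_cl S P B dSP dSB dPB.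
rewrite -(EQ ms p3 (V := fun j => S j || B j)); last by rewrite /Y3 /k /l3; solve_cl S P B dSP dSB dPB.
rewrite -(EQ ms p3 (V := S)); last by rewrite /Y3 /k /l3; solve_cl S P B dSP dSB dPB.
rewrite (A2 (fun j => S j || P j || B j)); last by rewrite /k; solve_cl S P B dSP dSB dPB.
rewrite (A3 S); last by rewrite /k; solve_cl S P B dSP dSB dPB.
have i1 := B2 (fun j => S j || P j) ltac:(rewrite /Y2 /k /l2; solve_cl S P B dSP dSB dPB).
have i2 := B3 (fun j => S j || B j) ltac:(rewrite /Y3 /k /l3; solve_cl S P B dSP dSB dPB).
rewrite (@sum_split _ _ _ (fun j => S j || P j || B j) (fun j => S j || P j) B) // in i1 *; last first.
  by move=> j; move: (dSB j) (dPB j); case: (S j); case: (P j); case: (B j).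
rewrite (@sum_split _ _ _ (fun j => S j || B j) S B) // in i2.
set a := (\sum_(j | B j) _)%R in i2 *.
set b := (\sum_(j | S j || P j) phi X j)%R in i1 *.
set c := (\sum_(j | S j) phi X j)%R in i2 *.
set d := (\sum_(j | S j || P j) phi Y2 j)%R in i1 *.
set e := (\sum_(j | S j || B j) phi Y3 j)%R in i2 *.
lra.
Qed.

Lemma STEP (T : realFieldType) (M : finType) (phi : rel M -> {ffun M -> T}) (R' : rel M) (u : pred M) (t : nat) :
  ms_strategyproof phi -> pref_order R' ->
  (\sum_(j | u j && (cnt R' j == t)) phi R' j
   <= fV phi (fun j => u j && (cnt R' j < t.+1)%N) - fV phi (fun j => u j && (cnt R' j < t)%N))%R.
Proof.
move=> ms pR'.
pose r := cnt R'.
pose l := fun j => nat_of_bool (~~ u j).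
pose Y1 := lexr r l.
have hX : forall a b, R' a b = (r a <= r b)%N by exact: rank_eq.
have [A1 B1] := @ML T M phi R' Y1 r l ms hX (fun a b => erefl).
have p1 : pref_order Y1 by apply: (pref_lex (k:=r) (l:=l)).
pose W := fun j => (r j < t)%N.
pose V1 := fun j => (r j < t)%N || ((r j == t) && u j).
have e1 := A1 W ltac:(move=> i j; rewrite /W; lia).
have i1 := B1 V1 ltac:(move=> i j; rewrite /V1 /Y1 /lexr /l; case: (u i); case: (u j) => /=; lia).
have q1 := EQ ms p1 (V := V1) ltac:(move=> i j; rewrite /V1 /Y1 /lexr /l; case: (u i); case: (u j) => /=; lia).
have q2 := EQ ms p1 (V := W) ltac:(move=> i j; rewrite /W /Y1 /lexr /l; case: (u i); case: (u j) => /=; lia).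
have sp : forall x : {ffun M -> T}, (\sum_(j | V1 j) x j = \sum_(j | W j) x j + \sum_(j | u j && (r j == t)) x j)%R.
  move=> x; apply: sum_split => j; rewrite /V1 /W; case: (u j); lia.
rewrite !sp in i1 q1.
have d1 : forall j, ~~ ((u j && (r j < t)%N) && (~~ u j && (r j < t)%N)) by move=> j; case: (u j); rewrite /= ?andbF.
have d2 : forall j, ~~ ((u j && (r j < t)%N) && (u j && (r j == t))) by move=> j; case: (u j) => //=; lia.
have d3 : forall j, ~~ ((~~ u j && (r j < t)%N) && (u j && (r j == t))) by move=> j; case: (u j); rewrite /= ?andbF.
have sb := @SUB T M phi (fun j => u j && (r j < t)%N) (fun j => ~~ u j && (r j < t)%N)
  (fun j => u j && (r j == t)) ms d1 d2 d3.
rewrite (@f_ext _ _ _ (fun j => u j && (r j < t)%N || ~~ u j && (r j < t)%N || u j && (r j == t)) V1 ms) in sb; last by move=> j; rewrite /V1; case: (u j) => /=; lia.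
rewrite (@f_ext _ _ _ (fun j => u j && (r j < t)%N || ~~ u j && (r j < t)%N) W ms) in sb; last by move=> j; rewrite /W; case: (u j) => /=; lia.
rewrite (@f_ext _ _ _ (fun j => u j && (r j < t)%N || u j && (r j == t)) (fun j => u j && (cnt R' j < t.+1)%N) ms) in sb;
  last by move=> j; rewrite /r; case: (u j) => /=; lia.
move: sb i1 q1 q2 e1; rewrite -/r => sb i1 q1 q2 e1; lra.
Qed.

Theorem lemma8 (T : realFieldType) (M : finType) (phi : rel M -> {ffun M -> T}) :
  mechanism phi -> ms_strategyproof phi -> strategyproof phi.
Proof.
move=> _ ms R R' pR pR' a.
have rlt : forall j, (cnt R' j < #|M|.+1)%N by move=> j; rewrite ltnS /cnt; apply: max_card.
pose p := fun j => Ordinal (rlt j).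
rewrite (partition_big p predT) //=.
rewrite (EQ ms pR (V := fun j => R j a)); last first.
  by move=> i j Rja Rij; have [_ tr] := pR; exact: tr Rij Rja.
pose F := fun t => fV phi (fun j => R j a && (cnt R' j < t)%N).
have -> : fV phi (fun j => R j a) = (F #|M|.+1 - F 0%N)%R.
  have -> : F 0%N = 0%R by rewrite /F /fV big_pred0 // => j; rewrite ltn0 andbF.
  rewrite subr0 /F; apply: f_ext => // j; by rewrite rlt andbT.
rewrite -telescope_sumr // big_mkord.
apply: ler_sum => t _.
rewrite (eq_bigl (fun j => R j a && (cnt R' j == t))); last first.
  by move=> j; rewrite /p.
exact: STEP.
Qed.
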